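(* Let $\rho=[uvwx]\subset\mathbb{R}^3$ be a unit rhombus. Suppose there is a coloring $\chi:\mathbb{R}^3\to\{1,2,3\}$ with no rainbow triangles such that $\chi(u)=\chi(v)=1$, $\chi(w)=2$, $\chi(x)=3$. Then $\rho$ cannot be domed.
   Context: A unit rhombus is a closed polygon $[uvwx]$ in $\mathbb{R}^3$ with all four sides of length $1$. A rainbow triangle for $\chi$ is a triple of points $x,y,z\in\mathbb{R}^3$ with $|xy|=|yz|=|zx|=1$ and $\{\chi(x),\chi(y),\chi(z)\}=\{1,2,3\}$. A closed polygon with unit edges can be domed if there is a finite connected 2-dimensional simplicial complex which is a compact surface with a single boundary cycle, with a map to $\mathbb{R}^3$ linear on simplices sending each triangle to a unit equilateral triangle and the boundary cycle onto the polygon vertex by vertex in cyclic order (no embedding/immersion required). *)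

(* Defs.v *)
From mathcomp Require Import all_boot.
From Stdlib Require Import Reals.

Set Implicit Arguments.
Unset Strict Implicit.
Unset Printing Implicit Defensive.

Definition point : Type := (R * R * R)%type.

Definition sqdist (p q : point) : R :=
  let '(p1, p2, p3) := p in let '(q1, q2, q3) := q in
  ((p1 - q1) * (p1 - q1) + (p2 - q2) * (p2 - q2) + (p3 - q3) * (p3 - q3))%R.

Definition unit_dist (p q : point) : Prop := sqdist p q = 1%R.

Definition unit_rhombus (u v w x : point) : Prop :=
  unit_dist u v /\ unit_dist v w /\ unit_dist w x /\ unit_dist x u.

Definition is_3coloring (chi : point -> nat) : Prop :=
  forall p, chi p = 1 \/ chi p = 2 \/ chi p = 3.

Definition rainbow_triangle (chi : point -> nat) (x y z : point) : Prop :=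
  unit_dist x y /\ unit_dist y z /\ unit_dist z x /\
  (forall c : nat, (c = 1 \/ c = 2 \/ c = 3) <-> (c = chi x \/ c = chi y \/ c = chi z)).

Definition no_rainbow (chi : point -> nat) : Prop :=
  forall x y z, ~ rainbow_triangle chi x y z.

(** Finite 2-dimensional simplicial complexes on vertex set 'I_n, given by
    their set T of triangles (2-simplices); edges/vertices are faces of
    triangles (the complex is pure 2-dimensional). *)
Section Complex.
Variable n : nat.
Variable T : {set {set 'I_n}}.

Definition edge_deg (e : {set 'I_n}) : nat := #|[set t in T | e \subset t]|.

Definition is_edge (e : {set 'I_n}) : bool :=
  (#|e| == 2) && [exists t in T, e \subset t].

Definition adj : rel 'I_n := fun a b => [exists t in T, (a \in t) && (b \in t)].

Definition in_link (a b : 'I_n) : bool := (b != a) && adj a b.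
Definition link_rel (a : 'I_n) : rel 'I_n := fun b c => [set a; b; c] \in T.

(** T is a compact, connected combinatorial surface (with boundary):
    pure 2-dimensional, every edge in one or two triangles, every vertex
    link connected (hence a path or a cycle), and the 1-skeleton connected. *)
Definition connected_surface : Prop :=
  [/\ forall t, t \in T -> #|t| = 2.+1,
      forall a : 'I_n, exists2 t, t \in T & a \in t,
      forall e, is_edge e -> edge_deg e = 1 \/ edge_deg e = 2,
      forall a b c, in_link a b -> in_link a c -> connect (link_rel a) b c
    & forall a b, connect adj a b].

Definition boundary_edge (e : {set 'I_n}) : bool := is_edge e && (edge_deg e == 1).

Definition boundary_4cycle (b0 b1 b2 b3 : 'I_n) : Prop :=
  uniq [:: b0; b1; b2; b3] /\
  forall e, boundary_edge e <->
    e \in [:: [set b0; b1]; [set b1; b2]; [set b2; b3]; [set b3; b0]].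

End Complex.

(** The closed polygon [uvwx] (unit edges) can be domed: there is a finite
    connected simplicial surface with a single boundary cycle b0 b1 b2 b3 and
    a map f (determining the simplexwise-linear map) sending every triangle to a
    unit equilateral triangle and b0,b1,b2,b3 to u,v,w,x. *)
Definition domable (u v w x : point) : Prop :=
  exists (n : nat) (T : {set {set 'I_n}}) (f : 'I_n -> point) (b0 b1 b2 b3 : 'I_n),
    [/\ connected_surface T,
        boundary_4cycle T b0 b1 b2 b3,
        (forall t a b, t \in T -> a \in t -> b \in t -> a != b -> unit_dist (f a) (f b))
      & [/\ f b0 = u, f b1 = v, f b2 = w & f b3 = x]].

(* Main.v *)
Require Import Defs.
From mathcomp Require Import all_boot.
From Stdlib Require Import Reals.

Lemma sum_even (I : finType) (P : pred I) (F : I -> nat) :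
  (forall i, P i -> ~~ odd (F i)) -> ~~ odd (\sum_(i | P i) F i).
Proof.
move=> H; apply: (big_ind (fun x => ~~ odd x)) => //.
by move=> x y hx hy; rewrite oddD (negbTE hx) (negbTE hy).
Qed.

Lemma sum_pos_ex (I : finType) (F : I -> nat) :
  0 < \sum_i F i -> exists i, 0 < F i.
Proof.
move=> H; case: (boolP [exists i, 0 < F i]) => [/existsP//|/existsPn Hn].
rewrite big1 in H => // i _; apply/eqP; rewrite -leqn0 leqNgt; exact: Hn.
Qed.

Theorem proposition5p9 (u v w x : point) (chi : point -> nat) :
  unit_rhombus u v w x ->
  is_3coloring chi ->
  no_rainbow chi ->
  chi u = 1%nat -> chi v = 1%nat -> chi w = 2%nat -> chi x = 3%nat ->
  ~ domable u v w x.
Proof.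
move=> _ H3 Hnr Cu Cv Cw Cx [n [T [f [b0 [b1 [b2 [b3 [[Ht3 _ Hdeg _ _] [Huniq Hbd] Hf [F0 F1 F2 F3]]]]]]]]].
pose g := fun a => chi (f a).
have G0 : g b0 = 1 by rewrite /g F0.
have G1 : g b1 = 1 by rewrite /g F1.
have G2 : g b2 = 2 by rewrite /g F2.
have G3 : g b3 = 3 by rewrite /g F3.
pose h := fun a b (t : {set 'I_n}) => ((g a == 1) && (a \in t)) * ((g b == 2) && (b \in t)).
pose S := \sum_(a : 'I_n) \sum_(b : 'I_n) \sum_(t in T) h a b t.
have C1 : ~~ odd S.
  rewrite /S.
  under eq_bigr => a _ do rewrite exchange_big.
  rewrite exchange_big /=.
  apply: sum_even => t tT.
  pose k i := \sum_(a < n) ((g a == i) && (a \in t)).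
  have -> : \sum_(a < n) \sum_(b < n) h a b t = k 1 * k 2.
    rewrite big_distrl; apply eq_bigr => a _; rewrite big_distrr //.
  rewrite oddM; apply/negP => /andP [o1 o2].
  have Hsum : k 1 + k 2 + k 3 = 3.
    rewrite -[RHS](Ht3 t tT) -sum1_card big_mkcond -!big_split /=.
    apply eq_bigr => a _; case: (a \in t); rewrite ?andbT ?andbF //.
    rewrite /g; by case: (H3 (f a)) => [->|[->|->]].
  have k3 : 0 < k 3.
    case: (posnP (k 3)) => [e3|//]; move: Hsum; rewrite e3 addn0 => /(congr1 odd).
    by rewrite oddD o1 o2.
  have [a Ha] := sum_pos_ex _ _ (odd_gt0 o1).
  have [b Hb] := sum_pos_ex _ _ (odd_gt0 o2).
  have [c Hc] := sum_pos_ex _ _ k3.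
  move: Ha Hb Hc; rewrite !lt0b => /andP [/eqP ga at_] /andP [/eqP gb bt] /andP [/eqP gc ct].
  have dab : a != b by apply/eqP => e; rewrite e gb in ga.
  have dbc : b != c by apply/eqP => e; rewrite e gc in gb.
  have dca : c != a by apply/eqP => e; rewrite e ga in gc.
  apply: (Hnr (f a) (f b) (f c)); split; first apply: (Hf t) => //.
  split; first apply: (Hf t) => //.
  split; first apply: (Hf t) => //.
  move=> m; change (chi (f a)) with (g a); change (chi (f b)) with (g b);
  change (chi (f c)) with (g c); rewrite ga gb gc; tauto.
have E : forall a b, \sum_(t in T) h a b t =
      ((g a == 1) && (g b == 2)) * edge_deg T [set a; b].
  move=> a b; rewrite /h.
  case Ea: (g a == 1); case Eb: (g b == 2); rewrite /= ?mul0n ?mul1n;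
    try by (apply: big1 => t _; rewrite ?mul0n ?muln0).
  rewrite /edge_deg -sum1_card big_mkcond [RHS]big_mkcond; apply eq_bigr => t _.
  rewrite !inE subUset !sub1set.
  by case: (t \in T); case: (a \in t); case: (b \in t).
have Hev : forall a b, (a != b1) || (b != b2) -> ~~ odd (\sum_(t in T) h a b t).
  move=> a b Hne; rewrite E.
  case col: ((g a == 1) && (g b == 2)); last by rewrite mul0n.
  rewrite mul1n; move/andP: col => [/eqP ga /eqP gb].
  have dab : a != b by apply/eqP => e; rewrite e gb in ga.
  case: (posnP (edge_deg T [set a; b])) => [->//|pos].
  have ie : is_edge T [set a; b].
    rewrite /is_edge cards2 dab /=.
    move: pos; rewrite /edge_deg card_gt0 => /set0Pn [t]; rewrite inE => /andP [tT sub].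
    by apply/existsP; exists t; rewrite tT sub.
  case: (Hdeg _ ie) => [e1|->//].
  have bd : boundary_edge T [set a; b] by rewrite /boundary_edge ie e1.
  have Ha : a \in [set a; b] by rewrite !inE eqxx.
  have Hb : b \in [set a; b] by rewrite !inE eqxx orbT.
  move/Hbd: bd; rewrite !inE => /or4P [] /eqP E'; rewrite E' !inE in Ha Hb;
  move: Hne ga gb; case/orP: Ha => /eqP->; case/orP: Hb => /eqP-> => Hne ga gb;
  try congruence; by rewrite !eqxx in Hne.
have C2 : odd S.
  rewrite /S (bigD1 b1) //= (bigD1 b2) //= !oddD.
  have -> : odd (\sum_(t in T) h b1 b2 t).
    have bd : boundary_edge T [set b1; b2] by apply/Hbd; rewrite !inE eqxx orbT.
    move/andP: bd => [_ /eqP e1]; by rewrite E G1 G2 e1.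
  have A1 : ~~ odd (\sum_(i < n | i != b2) \sum_(t in T) h b1 i t).
    by apply: sum_even => b ne; apply: Hev; rewrite ne orbT.
  have A2 : ~~ odd (\sum_(i < n | i != b1) \sum_(b < n) \sum_(t in T) h i b t).
    by apply: sum_even => a ne; apply: sum_even => b _; apply: Hev; rewrite ne.
  by rewrite (negbTE A1) (negbTE A2).
by rewrite C2 in C1.
Qed.
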